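(* Let $k\ge1$ and let $G\in\mathfrak A$ be a graph containing no subgraph isomorphic to $\Gamma_{k+1}$. Then $G$ has the $\Gamma_k$-twin property.
   Context: $\mathfrak A$ is the class of maximal triangle-free graphs with at least two vertices containing no induced cycle of length six. (Maximal triangle-free: no triangle, and adding any new edge creates a triangle.) Andrásfai graph $\Gamma_k$: vertex set $\mathbb Z/(3k-1)\mathbb Z$, $ij$ an edge iff $i-j\in\{k,\dots,2k-1\}$ mod $3k-1$. For a subgraph $H$ of $G$, $q\in V(H)$, $q'\in V(G)$, $q'$ is an $H$-twin of $q$ if $\mathrm N(q)\cap V(H)=\mathrm N(q')\cap V(H)$ (neighbourhoods in $G$). For graphs $F,G$, $G$ has the $F$-twin property if for every $e\in E(F)$: whenever $H\subseteq G$ is isomorphic to $F$, $qz\in E(H)$ corresponds to $e$, and $q',z'$ are $H$-twins of $q,z$, then $q'z'\in E(G)$. *)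

(* Defs.v *)
From mathcomp Require Import all_boot.
Set Implicit Arguments. Unset Strict Implicit. Unset Printing Implicit Defensive.

Definition simple_graph (T : finType) (e : rel T) : Prop :=
  symmetric e /\ irreflexive e.

Definition triangle_free (T : finType) (e : rel T) : Prop :=
  forall x y z : T, e x y -> e y z -> e x z -> False.

(* Maximal triangle-free: triangle-free, and adding any new edge xy
   (x <> y non-adjacent) creates a triangle, i.e. x,y have a common neighbour. *)
Definition maximal_triangle_free (T : finType) (e : rel T) : Prop :=
  triangle_free e /\
  forall x y : T, x != y -> ~~ e x y -> exists z : T, e x z && e z y.

Definition subgraph_copy (U T : finType) (f : rel U) (e : rel T) (phi : U -> T) : Prop :=
  injective phi /\ forall a b : U, f a b -> e (phi a) (phi b).

Definition induced_copy (U T : finType) (f : rel U) (e : rel T) (phi : U -> T) : Prop :=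
  injective phi /\ forall a b : U, e (phi a) (phi b) = f a b.

Definition cycle6 : rel 'I_6 :=
  fun i j => let d := (i + 6 - j) %% 6 in (d == 1) || (d == 5).

Definition classA (T : finType) (e : rel T) : Prop :=
  [/\ simple_graph e, 1 < #|T|, maximal_triangle_free e &
      ~ exists phi : 'I_6 -> T, induced_copy cycle6 e phi].

Definition andrasfai (k : nat) : rel 'I_(3 * k - 1) :=
  fun i j => let n := 3 * k - 1 in
             let d := (i + n - j) %% n in (k <= d) && (d <= 2 * k - 1).
Arguments andrasfai k : clear implicits.

(* q' is an H-twin of q, where V(H) is the image of phi (neighbourhoods in G). *)
Definition H_twin (U T : finType) (e : rel T) (phi : U -> T) (q q' : T) : Prop :=
  forall w : U, e q (phi w) = e q' (phi w).

Definition twin_property (U T : finType) (f : rel U) (e : rel T) : Prop :=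
  forall phi : U -> T, subgraph_copy f e phi ->
  forall a b : U, f a b ->
  forall q' z' : T, H_twin e phi (phi a) q' -> H_twin e phi (phi b) z' -> e q' z'.

(* Main.v *)
Require Import Defs.
From mathcomp Require Import all_boot zify.
Set Implicit Arguments. Unset Strict Implicit.

Lemma ddE n x y : x < n -> y < n ->
  (x + n - y) %% n = if y <= x then x - y else x + n - y.
Proof.
move=> hx hy; case: leqP => h.
  have -> : x + n - y = x - y + n by lia.
  by rewrite modnDr modn_small //; lia.
by rewrite modn_small //; lia.
Qed.

Lemma modS n x a : x < n -> a < n ->
  (x + a) %% n = if x + a < n then x + a else x + a - n.
Proof.
move=> hx ha; case: ltnP => h; first by rewrite modn_small.
by rewrite -{1}(subnK h) modnDr modn_small //; lia.
Qed.

Lemma mk_C6 (T : finType) (e : rel T) (v0 v1 v2 v3 v4 v5 : T) :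
  symmetric e -> irreflexive e -> uniq [:: v0; v1; v2; v3; v4; v5] ->
  e v0 v1 -> e v1 v2 -> e v2 v3 -> e v3 v4 -> e v4 v5 -> e v5 v0 ->
  ~~ e v0 v2 -> ~~ e v0 v3 -> ~~ e v0 v4 -> ~~ e v1 v3 -> ~~ e v1 v4 ->
  ~~ e v1 v5 -> ~~ e v2 v4 -> ~~ e v2 v5 -> ~~ e v3 v5 ->
  exists phi : 'I_6 -> T, induced_copy cycle6 e phi.
Proof.
move=> sy ir U e01 e12 e23 e34 e45 e50 n02 n03 n04 n13 n14 n15 n24 n25 n35.
exists (fun i : 'I_6 => nth v0 [:: v0; v1; v2; v3; v4; v5] i); split.
  move=> i j /eqP; rewrite nth_uniq // => /eqP; exact: val_inj.
have e10' : e v1 v0 by rewrite sy.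
have e21' : e v2 v1 by rewrite sy.
have e32' : e v3 v2 by rewrite sy.
have e43' : e v4 v3 by rewrite sy.
have e54' : e v5 v4 by rewrite sy.
have e05' : e v0 v5 by rewrite sy.
have f02 := negbTE n02.
have f20 : e v2 v0 = false by rewrite sy.
have f03 := negbTE n03.
have f30 : e v3 v0 = false by rewrite sy.
have f04 := negbTE n04.
have f40 : e v4 v0 = false by rewrite sy.
have f13 := negbTE n13.
have f31 : e v3 v1 = false by rewrite sy.
have f14 := negbTE n14.
have f41 : e v4 v1 = false by rewrite sy.
have f15 := negbTE n15.
have f51 : e v5 v1 = false by rewrite sy.
have f24 := negbTE n24.
have f42 : e v4 v2 = false by rewrite sy.
have f25 := negbTE n25.
have f52 : e v5 v2 = false by rewrite sy.
have f35 := negbTE n35.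
have f53 : e v5 v3 = false by rewrite sy.
move=> [[|[|[|[|[|[|//]]]]]] ?] [[|[|[|[|[|[|//]]]]]] ?]; rewrite /cycle6 /= ?ir ?e01 ?e10' ?e12 ?e21' ?e23 ?e32' ?e34 ?e43' ?e45 ?e54' ?e50 ?e05' ?f02 ?f20 ?f03 ?f30 ?f04 ?f40 ?f13 ?f31 ?f14 ?f41 ?f15 ?f51 ?f24 ?f42 ?f25 ?f52 ?f35 ?f53 //.
Qed.
Definition adjN k x y := (y + k <= x <= y + (2*k-1)) || (x + k <= y <= x + (2*k-1)).

Lemma twin_notin k n (T : finType) (e : rel T) (P : nat -> T) (u : T) a c :
  1 <= k -> n = 3*k-1 -> symmetric e -> irreflexive e -> triangle_free e ->
  (forall x y, x < n -> y < n -> adjN k x y -> e (P x) (P y)) ->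
  (forall m, m < n -> e u (P m) = e (P a) (P m)) -> a < n -> c < n -> u = P c -> c = a.
Proof.
move=> k1 hn sy ir tf E Tw ha hc hu.
case: (boolP (adjN k a c)) => hac.
  by have := Tw c hc; rewrite hu ir (E a c).
case: (eqVneq c a) => [//|cna].
have redP : forall m, m < 2 * n -> exists r, r < n /\ (r = m \/ r + n = m).
  move=> m hm; case: (ltnP m n) => h; first by exists m; split; [|left].
  by exists (m - n); split; [lia|right; lia].
have key : forall x y, x < n -> y < n -> adjN k a x -> adjN k c y -> adjN k x y -> False.
  move=> x y hx hy h1 h2 h3.
  by apply: (tf (P a) (P x) (P y)); [exact: E | exact: E | rewrite -Tw // hu; exact: E].
move: hac; rewrite /adjN => hac.
have [x1 [hx1 ex1]] := redP (a + k) ltac:(lia).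
have [y1 [hy1 ey1]] := redP (a + 2 * k) ltac:(lia).
have [x2 [hx2 ex2]] := redP (a + 2 * k - 1) ltac:(lia).
have [y2 [hy2 ey2]] := redP (a + k - 1) ltac:(lia).
have [hd|hd] : ((c + n - a) %% n < k) \/ (2 * k <= (c + n - a) %% n).
  rewrite ddE //; case: (leqP a c) => ?; lia.
  exfalso; apply: (key x1 y1) => //; clear -hd hn k1 ex1 ey1 hx1 hy1 ha hc cna; rewrite /adjN; move: hd; rewrite ddE //;
    case: (leqP a c) => ? ?; case: ex1 => ?; case: ey1 => ?; lia.
exfalso; apply: (key x2 y2) => //; clear -hd hn k1 ex2 ey2 hx2 hy2 ha hc cna; rewrite /adjN; move: hd; rewrite ddE //;
  case: (leqP a c) => ? ?; case: ex2 => ?; case: ey2 => ?; lia.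
Qed.

Ltac ar := try rewrite /adjN; lia.

Lemma core k n (T : finType) (e : rel T) (P : nat -> T) (q' z' : T) d :
  1 <= k -> n = 3 * k - 1 -> classA e ->
  ~ (exists phi : 'I_(3 * k.+1 - 1) -> T, subgraph_copy (andrasfai k.+1) e phi) ->
  (forall x y, x < n -> y < n -> adjN k x y -> e (P x) (P y)) ->
  (forall x y, x < n -> y < n -> P x = P y -> x = y) ->
  d = 2 * k - 1 \/ (k < d /\ d <= 2 * k - 2) ->
  (forall m, m < n -> e q' (P m) = e (P 0) (P m)) ->
  (forall m, m < n -> e z' (P m) = e (P d) (P m)) ->
  e q' z'.
Proof.
move=> k1 hn [[sy ir] _ [tf mx] noC6] noG E Inj dcase Tq Tz.
have [dlo dhi] : k <= d /\ d <= 2 * k - 1.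
  by case: dcase => [->|[? ?]]; lia.
apply: contraT => nqz.
suff : False by [].
have nadj x y c : x < n -> y < n -> c < n -> adjN k x c -> adjN k y c -> e (P x) (P y) = false.
  move=> hx hy hc a1 a2; apply/negP => h.
  by apply: (tf _ _ _ (E _ _ hx hc a1) _ h); rewrite sy; apply: E.
have Pneq x y : x < n -> y < n -> x != y -> P x != P y.
  by move=> hx hy; apply: contra => /eqP /Inj ->.
have qout c : c < n -> q' != P c.
  move=> hc; apply/eqP => hq.
  have c0 := twin_notin k1 hn sy ir tf E Tq (ltac:(lia) : 0 < n) hc hq; subst c.
  by move: nqz; rewrite hq sy Tz ?(E d 0) //; ar.
have zout c : c < n -> z' != P c.
  move=> hc; apply/eqP => hz.
  have cd := twin_notin k1 hn sy ir tf E Tz (ltac:(lia) : d < n) hc hz; subst c.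
  by move: nqz; rewrite hz Tq ?(E 0 d) //; ar.
have qz : q' != z'.
  apply/eqP => hq.
  apply: (tf (P 0) q' (P d)).
  - by rewrite sy hq Tz ?(E d 0) //; ar.
  - by rewrite Tq ?(E 0 d) //; ar.
  - by rewrite (E 0 d) //; ar.
case: dcase => [dE|[dl dh]]; last first.
  apply: noC6.
  apply: (@mk_C6 _ e q' (P k) (P (d + k)) z' (P (d - k)) (P d.+1)) => //.
  - { rewrite /= !inE !negb_or -!andbA; repeat (apply/andP; split).
    all: try (by apply: qout; ar). all: try (by rewrite eq_sym; apply: qout; ar). all: try (by apply: zout; ar). all: try (by rewrite eq_sym; apply: zout; ar). all: try exact: qz. all: try (apply: Pneq; ar); try done. }
  - by rewrite Tq ?(E 0 k) //; ar.
  - by apply: E; ar.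
  - by rewrite sy Tz ?(E d (d + k)) //; ar.
  - by rewrite Tz ?(E d (d - k)) //; ar.
  - by apply: E; ar.
  - by rewrite sy Tq ?(E 0 d.+1) //; ar.
  - by rewrite Tq ?(nadj 0 (d + k) k) //; ar.
  - by rewrite Tq ?(nadj 0 (d - k) d.+1) //; ar.
  - by rewrite sy Tz ?(nadj d k (d + k)) //; ar.
  - by rewrite (nadj k (d - k) (2 * k)) //; ar.
  - by rewrite (nadj k d.+1 0) //; ar.
  - by rewrite (nadj (d + k) (d - k) d) //; ar.
  - by rewrite (nadj (d + k) d.+1 (d - k + 1)) //; ar.
  - by rewrite Tz ?(nadj d d.+1 0) //; ar.
subst d.
have [w /andP [qw wz]] := mx q' z' qz nqz.
have wout c : c < n -> w != P c.
  move=> hc; apply/eqP => hw; subst w.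
  apply: (tf (P 0) (P c) (P (2 * k - 1))).
  - by rewrite -Tq.
  - by rewrite sy -Tz // sy.
  - by apply: E; ar.
have wq : w != q' by apply/eqP => h; move: qw; rewrite h ir.
have wzz : w != z' by apply/eqP => h; move: wz; rewrite h ir.
have wR r : 2 * k <= r -> r <= 3 * k - 2 -> e w (P r).
  move=> h1 h2; apply: contraT => nwr; exfalso; apply: noC6.
  apply: (@mk_C6 _ e w q' (P k) (P r) (P (k - 1)) z') => //.
  - { rewrite /= !inE !negb_or -!andbA; repeat (apply/andP; split).
    all: try (by apply: qout; ar). all: try (by rewrite eq_sym; apply: qout; ar).
    all: try (by apply: zout; ar). all: try (by rewrite eq_sym; apply: zout; ar).
    all: try (by apply: wout; ar). all: try (by rewrite eq_sym; apply: wout; ar).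
    all: try exact: qz. all: try exact: wq. all: try exact: wzz.
    all: try (apply: Pneq; ar); try done. }
  - by rewrite sy.
  - by rewrite Tq ?(E 0 k) //; ar.
  - by apply: E; ar.
  - by apply: E; ar.
  - by rewrite sy Tz ?(E (2 * k - 1) (k - 1)) //; ar.
  - by rewrite sy.
  - apply/negP => h; apply: (tf w q' (P k)) => //; first by rewrite sy.
    by rewrite Tq ?(E 0 k) //; ar.
  - apply/negP => h; apply: (tf w z' (P (k - 1))) => //.
    by rewrite Tz ?(E (2 * k - 1) (k - 1)) //; ar.
  - by rewrite Tq ?(nadj 0 r k) //; ar.
  - by rewrite Tq ?(nadj 0 (k - 1) (2 * k - 1)) //; ar.
  - by rewrite (nadj k (k - 1) r) //; ar.
  - by rewrite sy Tz ?(nadj (2 * k - 1) k 0) //; ar.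
  - by rewrite sy Tz ?(nadj (2 * k - 1) r (k - 1)) //; ar.
pose G j := if j < k then P j else if j < k.+1 then w else if j < 2 * k + 1 then P (j - 1)
  else if j < 2 * k + 2 then z' else if j < 3 * k + 1 then P (j - 2) else q'.
have Gc j : j < 3 * k + 2 ->
  (j < k /\ G j = P j) \/ (j = k /\ G j = w) \/ ((k < j /\ j <= 2 * k) /\ G j = P (j - 1)) \/
  (j = 2 * k + 1 /\ G j = z') \/ ((2 * k + 2 <= j /\ j <= 3 * k) /\ G j = P (j - 2)) \/
  (j = 3 * k + 1 /\ G j = q').
  move=> hj; rewrite /G.
  case: (ltnP j k) => h1; first by left.
  case: (ltnP j k.+1) => h2; first by right; left; split => //; lia.
  case: (ltnP j (2 * k + 1)) => h3; first by do 2 right; left; split => //; lia.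
  case: (ltnP j (2 * k + 2)) => h4; first by do 3 right; left; split => //; lia.
  case: (ltnP j (3 * k + 1)) => h5; first by do 4 right; left; split => //; lia.
  by do 5 right; split => //; lia.
have Gedge i j : i < 3 * k + 2 -> j < 3 * k + 2 -> j + k.+1 <= i -> i <= j + 2 * k + 1 ->
    e (G i) (G j).
  { move=> hi hj h1 h2.
  case: (Gc i hi) => [[? ->]|[[? ->]|[[? ->]|[[? ->]|[[? ->]|[? ->]]]]]];
  case: (Gc j hj) => [[? ->]|[[? ->]|[[? ->]|[[? ->]|[[? ->]|[? ->]]]]]].
  all: try (exfalso; lia).
  all: try (by apply: E; ar).
  all: try (by apply: wR; ar). all: try (by rewrite sy; apply: wR; ar).
  all: try (by rewrite Tz ?E //; ar). all: try (by rewrite sy Tz ?E //; ar).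
  all: try (by rewrite Tq ?E //; ar). all: try (by rewrite sy Tq ?E //; ar).
  all: try (by rewrite sy). all: try done. }
have Ginj i j : i < 3 * k + 2 -> j < 3 * k + 2 -> G i = G j -> i = j.
  { move=> hi hj.
  case: (Gc i hi) => [[? ->]|[[? ->]|[[? ->]|[[? ->]|[[? ->]|[? ->]]]]]];
  case: (Gc j hj) => [[? ->]|[[? ->]|[[? ->]|[[? ->]|[[? ->]|[? ->]]]]]].
  all: try (by move=> _; lia).
  all: try (by move/Inj => h; have := h ltac:(ar) ltac:(ar); lia).
  all: move/eqP => EQ; exfalso; move: EQ; apply/negP.
  all: try (by apply: qout; ar). all: try (by rewrite eq_sym; apply: qout; ar).
  all: try (by apply: zout; ar). all: try (by rewrite eq_sym; apply: zout; ar).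
  all: try (by apply: wout; ar). all: try (by rewrite eq_sym; apply: wout; ar).
  all: try done. all: try (by rewrite eq_sym). }
apply: noG; exists (fun i : 'I_(3 * k.+1 - 1) => G i); split.
  move=> i j hij; apply: val_inj; apply: Ginj hij.
  - by have := ltn_ord i; lia.
  - by have := ltn_ord j; lia.
move=> i j; rewrite /andrasfai /=.
have hi := ltn_ord i; have hj := ltn_ord j.
rewrite ddE //; case: (leqP j i) => hji hc.
  by apply: Gedge; lia.
by rewrite sy; apply: Gedge; lia.
Qed.

Lemma modsplit n m : 0 < n -> m < 2 * n ->
  m %% n < n /\ (m %% n = m \/ m %% n + n = m).
Proof.
move=> n0 hm; split; first exact: ltn_pmod.
case: (ltnP m n) => h; first by left; rewrite modn_small.
by right; rewrite -{1}(subnK h) modnDr modn_small; lia.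
Qed.

Lemma rot_apply k (T : finType) (e : rel T) (phi : 'I_(3 * k - 1) -> T) (s t : 'I_(3 * k - 1)) u v :
  1 <= k -> classA e ->
  ~ (exists phi : 'I_(3 * k.+1 - 1) -> T, subgraph_copy (andrasfai k.+1) e phi) ->
  subgraph_copy (andrasfai k) e phi ->
  H_twin e phi (phi s) u -> H_twin e phi (phi t) v ->
  (let d := if s <= t then t - s else t + (3 * k - 1) - s in
   d = 2 * k - 1 \/ (k < d /\ d <= 2 * k - 2)) ->
  e u v.
Proof.
move=> k1 cA noG [phinj phiE] Ts Tt /= dc.
have n0 : 0 < 3 * k - 1 by lia.
pose mk m : 'I_(3 * k - 1) := Ordinal (ltn_pmod m n0).
pose P m := phi (mk m).
have hs := ltn_ord s; have ht := ltn_ord t.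
pose Q m := P (m + s).
have E x y : x < 3 * k - 1 -> y < 3 * k - 1 -> adjN k x y -> e (Q x) (Q y).
  move=> hx hy hxy; apply: phiE; rewrite /andrasfai /=.
  have [hX eX] := modsplit (m := x + s) n0 ltac:(lia).
  have [hY eY] := modsplit (m := y + s) n0 ltac:(lia).
  move: hX eX hY eY; set X := (x + s) %% _; set Y := (y + s) %% _ => hX eX hY eY.
  rewrite ddE //; case: (leqP Y X) => ?; move: hxy; rewrite /adjN; case: eX => ?; case: eY => ?; lia.
have Inj x y : x < 3 * k - 1 -> y < 3 * k - 1 -> Q x = Q y -> x = y.
  move=> hx hy /phinj /(congr1 val) /= h.
  have [hX eX] := modsplit (m := x + s) n0 ltac:(lia).
  have [hY eY] := modsplit (m := y + s) n0 ltac:(lia).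
  move: h; case: eX => ?; case: eY => ?; lia.
have Qv m (r : 'I_(3 * k - 1)) : m < 3 * k - 1 -> (m + s) %% (3 * k - 1) = r -> Q m = phi r.
  by move=> hm h; rewrite /Q /P; congr phi; apply: val_inj.
apply: (core (k := k) (e := e) (P := Q) (n := 3 * k - 1)
          (d := if s <= t then t - s else t + (3 * k - 1) - s)) => //.
- move=> m hm; rewrite (Qv 0 s) //; last by rewrite add0n modn_small.
  by rewrite /Q /P Ts.
- move=> m hm; rewrite (Qv (if s <= t then t - s else t + (3 * k - 1) - s) t) //; first by rewrite /Q /P Tt.
  + by case: leqP => ?; lia.
  + case: leqP => h.
      by rewrite subnK // modn_small.
    by rewrite subnK; [rewrite modnDr modn_small | lia].
Qed.

Unset Implicit Arguments.

Theorem lemma3p3 (k : nat) (T : finType) (e : rel T) :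
  1 <= k -> classA e ->
  ~ (exists phi : 'I_(3 * k.+1 - 1) -> T, subgraph_copy (andrasfai k.+1) e phi) ->
  twin_property (andrasfai k) e.
Proof.
move=> k1 cA noG phi cp a b hab q' z' Ta Tb.
have ha := ltn_ord a; have hb := ltn_ord b.
move: hab; rewrite /andrasfai /= ddE // => hab.
have [[sy _] _ _ _] := cA.
have [h1|h2] :
  (let d := if a <= b then b - a else b + (3 * k - 1) - a in
   d = 2 * k - 1 \/ (k < d /\ d <= 2 * k - 2)) \/
  (let d := if b <= a then a - b else a + (3 * k - 1) - b in
   d = 2 * k - 1 \/ (k < d /\ d <= 2 * k - 2)).
  rewrite /=; move: hab; case: (leqP a b) => ?; case: (leqP b a) => ?; lia.
  exact: (rot_apply k1 cA noG cp Ta Tb h1).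
rewrite sy; exact: (rot_apply k1 cA noG cp Tb Ta h2).
Qed.
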